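(* For every $\varepsilon>0$, the Pruned Plurality Veto rule with parameter $\varepsilon$ has metric distortion at most $9+\varepsilon$ and utilitarian distortion at most $\frac{(6+\varepsilon)m^2}{\varepsilon}=O(m^2/\varepsilon)$.
   Context: Setting: $\mathcal N$ is a set of $n$ agents and $\mathcal A$ a set of $m$ alternatives; each agent $i$ has a strict ranking $\sigma_i$ of $\mathcal A$, $X\succ_i Y$ meaning $i$ ranks $X$ above $Y$; the plurality score $\mathrm{plu}(X,\vec\sigma)$ is the number of agents ranking $X$ first. Metric framework: a pseudometric $d$ on $\mathcal N\cup\mathcal A$ is consistent with $\vec\sigma$ if $X\succ_iY\Rightarrow d(i,X)\le d(i,Y)$; $\mathrm{SC}(X,d)=\sum_i d(i,X)$; metric distortion of a rule $f$ is $\sup_{\vec\sigma}\sup_{d\text{ consistent}}\mathbb E_{X\sim f(\vec\sigma)}[\mathrm{SC}(X,d)]/\min_X\mathrm{SC}(X,d)$. Utilitarian framework: $u_i:\mathcal A\to\mathbb R_{\ge0}$ with $\sum_X u_i(X)=1$, consistent with $\vec\sigma$ if $X\succ_iY\Rightarrow u_i(X)\ge u_i(Y)$; $\mathrm{SW}(X,\vec u)=\sum_iu_i(X)$; utilitarian distortion of $f$ is $\sup_{\vec\sigma}\sup_{\vec u\text{ consistent}}\max_X\mathrm{SW}(X,\vec u)/\mathbb E_{X\sim f(\vec\sigma)}[\mathrm{SW}(X,\vec u)]$. Plurality Veto: initialize $\mathrm{score}(X)=\mathrm{plu}(X,\vec\sigma)$; let $S$ be the alternatives with positive score; process agents in a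 fixed order, each agent decrementing the score of her lowest-ranked alternative in $S$ and removing it from $S$ if its score hits $0$; output the last alternative removed. (Plurality Veto is known to have metric distortion $3$.) Pruned Plurality Veto with parameter $\varepsilon>0$: compute $\mathcal A'=\{X:\mathrm{plu}(X,\vec\sigma)\ge \frac{\varepsilon n}{(6+\varepsilon)m}\}$ (nonempty), restrict every ranking to $\mathcal A'$, and output the result of Plurality Veto on the restricted profile. *)

(* Defs.v *)
From HB Require Import structures.
From mathcomp Require Import all_boot all_order all_algebra.
From mathcomp Require Import perm reals.
Set Implicit Arguments. Unset Strict Implicit. Unset Printing Implicit Defensive.
Import Order.TTheory GRing.Theory Num.Theory.

(* Agents are 'I_n (processed by Plurality Veto in the order 0,1,...,n-1),
   alternatives are 'I_m.  A profile gives for each agent a strict ranking of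
   the alternatives, encoded as a permutation mapping each alternative to its
   position (0 = top). *)
Definition profile (n m : nat) := 'I_n -> {perm 'I_m}.

Section Voting.
Variables (n m : nat) (s : profile n m).

Definition prefers (i : 'I_n) (X Y : 'I_m) : bool := (s i X < s i Y)%N.

Definition top_in (A : {set 'I_m}) (i : 'I_n) : option 'I_m :=
  [pick X in A | [forall Y in A, (s i X <= s i Y)%N]].

Definition lowest_in (Sc : {set 'I_m}) (i : 'I_n) : option 'I_m :=
  [pick X in Sc | [forall Y in Sc, (s i Y <= s i X)%N]].

Definition plu_in (A : {set 'I_m}) (X : 'I_m) : nat :=
  #|[set i | top_in A i == Some X]|.

Definition plu (X : 'I_m) : nat := plu_in [set: 'I_m] X.

(* state: scores, current set Sc, last removed alternative *)
Definition pv_state := ({ffun 'I_m -> nat} * {set 'I_m} * option 'I_m)%type.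

Definition pv_step (st : pv_state) (i : 'I_n) : pv_state :=
  let: (sc, Sc, last) := st in
  match lowest_in Sc i with
  | Some X =>
      let sc' := [ffun Y => if Y == X then (sc X).-1 else sc Y] in
      if sc' X == 0%N then (sc', Sc :\ X, Some X) else (sc', Sc, last)
  | None => st
  end.

Definition plurality_veto_on (A : {set 'I_m}) : option 'I_m :=
  let sc0 := [ffun X => if X \in A then plu_in A X else 0%N] in
  let S0 := [set X in A | (0 < plu_in A X)%N] in
  (foldl pv_step (sc0, S0, None) (enum 'I_n)).2.

Definition plurality_veto : option 'I_m := plurality_veto_on [set: 'I_m].

Local Open Scope ring_scope.

Definition pruned_set {R : realType} (eps : R) : {set 'I_m} :=
  [set X | eps * n%:R / ((6 + eps) * m%:R) <= (plu X)%:R].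

Definition pruned_plurality_veto {R : realType} (eps : R) : option 'I_m :=
  plurality_veto_on (pruned_set eps).

Definition is_pseudometric {R : realType}
    (d : 'I_n + 'I_m -> 'I_n + 'I_m -> R) : Prop :=
  (forall x, d x x = 0) /\ (forall x y, 0 <= d x y) /\
  (forall x y, d x y = d y x) /\
  (forall x y z, d x z <= d x y + d y z).

Definition metric_consistent {R : realType}
    (d : 'I_n + 'I_m -> 'I_n + 'I_m -> R) : Prop :=
  forall i X Y, prefers i X Y -> d (inl i) (inr X) <= d (inl i) (inr Y).

Definition SC {R : realType} (d : 'I_n + 'I_m -> 'I_n + 'I_m -> R)
    (X : 'I_m) : R := \sum_(i < n) d (inl i) (inr X).

Definition is_unit_sum_utility {R : realType} (u : 'I_n -> 'I_m -> R) : Prop :=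
  forall i, (forall X, 0 <= u i X) /\ \sum_(X < m) u i X = 1.

Definition utility_consistent {R : realType} (u : 'I_n -> 'I_m -> R) : Prop :=
  forall i X Y, prefers i X Y -> u i Y <= u i X.

Definition SW {R : realType} (u : 'I_n -> 'I_m -> R) (X : 'I_m) : R :=
  \sum_(i < n) u i X.

End Voting.

(* Main.v *)
Require Import Defs.
From HB Require Import structures.
From mathcomp Require Import all_boot all_order all_algebra.
From mathcomp Require Import perm reals ring lra.
Import Order.TTheory GRing.Theory Num.Theory.
Local Open Scope ring_scope.

Lemma part_sum {V : nmodType} {n m} (f : 'I_m -> V) (t : 'I_n -> 'I_m) :
  \sum_j f (t j) = \sum_c f c *+ #|[set j | t j == c]|.
Proof.
under [RHS]eq_bigr => c _ do rewrite -sumr_const.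
transitivity (\sum_j \sum_c (if t j == c then f c else 0)).
  apply: eq_bigr => j _; rewrite -big_mkcond /=.
  by rewrite (eq_bigl (fun c => c == t j)) ?big_pred1_eq // => c; rewrite eq_sym.
rewrite exchange_big; apply: congr_big => // c _.
by rewrite [RHS]big_mkcond /=; apply: congr_big => // j _; rewrite inE.
Qed.


Lemma ex_min (R : realType) (I : finType) (G : {set I}) (F : I -> R) j1 :
  j1 \in G -> exists2 j, j \in G & forall k, k \in G -> F j <= F k.
Proof. move=> j1G. case: (arg_minP F j1G) => j jG H. by exists j. Qed.

Lemma top_spec {n m} (s : profile n m) (A : {set 'I_m}) x (j : 'I_n) : x \in A ->
  exists t, [/\ top_in s A j = Some t, t \in A & forall Y, Y \in A -> (s j t <= s j Y)%N].
Proof.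
move=> xA; rewrite /top_in; case: pickP => [t /andP[tA /forallP H] | none].
  by exists t; split => // Y YA; move/implyP: (H Y); apply.
case: (arg_minnP (fun X => s j X) xA) => c cA cmin.
move: (none c) => /=; rewrite [c \in A]cA /=; move/negbT/negP; case; apply/forallP => Y.
by apply/implyP => /cmin.
Qed.

Lemma rank_le {n m} (s : profile n m) i (Y Z : 'I_m) :
  (s i Y <= s i Z)%N -> Y = Z \/ prefers s i Y Z.
Proof.
rewrite leq_eqVlt => /orP[/eqP H|H]; last by right.
by left; apply: (@perm_inj _ (s i)); apply: val_inj.
Qed.

Section Run.
Variables (R : realType) (n m : nat) (s : profile n m).
Variables (g : 'I_n -> 'I_m -> R) (h : 'I_n -> R) (f : 'I_m -> R).
Hypothesis gmono : forall i Y Z, (s i Y <= s i Z)%N -> g i Y <= g i Z.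
Hypothesis gtri : forall i c, g i c <= h i + f c.

Lemma pv_run (l : seq 'I_n) : forall (sc : {ffun 'I_m -> nat}) (S : {set 'I_m}) (last : option 'I_m),
  (forall X, (X \in S) = (0 < sc X)%N) ->
  (\sum_X sc X)%N = size l -> (0 < size l)%N ->
  exists2 W, (foldl (pv_step s) (sc, S, last) l).2 = Some W &
    W \in S /\ \sum_(i <- l) g i W <= \sum_(i <- l) h i + \sum_X (sc X)%:R * f X.
Proof.
elim: l => [//|i l IH] sc S last HS Hsum _.
have [c0 Hc0] : exists c, (0 < sc c)%N.
  apply/existsP; apply: contraT; rewrite negb_exists => /forallP H.
  move: Hsum; rewrite big1 // => X _; move: (H X); by case: (sc X).
have [c Hlow /andP[cS /forallP cmax]] : exists2 c, lowest_in s S i = Some c &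
    (c \in S) && [forall Y in S, (s i Y <= s i c)%N].
  rewrite /lowest_in; case: pickP => [c Hc|none]; first by exists c.
  have c0S : c0 \in S by rewrite HS.
  case: (arg_maxnP (fun X => s i X) c0S) => c cS cmax.
  move: (none c) => /=; rewrite [c \in S]cS /=; move/negbT/negP; case; apply/forallP => Y.
  by apply/implyP => /cmax.
set sc' : {ffun 'I_m -> nat} := [ffun Y => if Y == c then (sc c).-1 else sc Y].
have Hstep : pv_step s (sc, S, last) i =
   (sc', if sc' c == 0%N then S :\ c else S, if sc' c == 0%N then Some c else last).
  by rewrite /pv_step Hlow -/sc'; case: ifP.
have -> : foldl (pv_step s) (sc,S,last) (i::l) = foldl (pv_step s) (pv_step s (sc,S,last) i) l by [].
rewrite Hstep.
have scc : (0 < sc c)%N by rewrite -HS.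
have sc'E : forall X, sc' X = if X == c then (sc c).-1 else sc X by move=> X; rewrite ffunE.
have Hsum' : (\sum_X sc' X)%N = size l.
  move: Hsum; rewrite [\sum_X sc X](bigD1 c) //= [\sum_X sc' X](bigD1 c) //= [sc' c]sc'E eqxx.
  rewrite [\sum_(X | X != c) sc' X](eq_bigr (fun X => sc X)); last by move=> X /negbTE XC; rewrite sc'E XC.
  by move: scc; case: (sc c) => //= k _ H; apply: succn_inj; rewrite -H.
have Hf : \sum_X (sc X)%:R * f X = f c + \sum_X (sc' X)%:R * f X.
  rewrite [\sum_X (sc X)%:R * f X](bigD1 c) //= [\sum_X (sc' X)%:R * f X](bigD1 c) //= [sc' c]sc'E eqxx addrA.
  rewrite [\sum_(X | X != c) (sc X)%:R * f X](eq_bigr (fun X => (sc' X)%:R * f X)); last by move=> X /negbTE XC; rewrite sc'E XC.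
  congr (_ + _); move: scc; case: (sc c) => //= k _.
  by rewrite -[k.+1]addn1 natrD mulrDl mul1r addrC.
set S'' := if sc' c == 0%N then S :\ c else S.
have HS' : forall X, (X \in S'') = (0 < sc' X)%N.
  move=> X; rewrite /S'' [sc' X]sc'E.
  have scc' : sc' c = (sc c).-1 by rewrite sc'E eqxx.
  rewrite scc'; case: (X =P c) => [->|/eqP XC].
    case: ((sc c).-1 =P 0%N) => [->|/eqP nz]; first by rewrite !inE eqxx.
    by rewrite cS lt0n.
  by rewrite -HS; case: ifP => // _; rewrite !inE XC.
have S''S : forall W, W \in S'' -> W \in S by move=> W; rewrite /S''; case: ifP => // _; rewrite inE => /andP[].
have key : forall W, W \in S -> g i W <= h i + f c.
  by move=> W WS; apply: le_trans (gtri i c); apply: gmono; move/implyP: (cmax W); apply.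
rewrite !big_cons Hf.
case: l IH Hsum' {Hsum} => [|j l] IH Hsum' /=.
  have z : forall X, sc' X = 0%N.
    move=> X; move: Hsum'; rewrite (bigD1 X) //=; by case: (sc' X).
  exists c; first by rewrite /S'' z eqxx.
  have -> : \sum_X (sc' X)%:R * f X = 0 by apply: big1 => X _; rewrite z mul0r.
  by split => //; rewrite ?big_cons !big_nil !addr0 ?big_seq1; apply: key.
have [W HW [WS Hb]] := IH sc' S'' (if sc' c == 0%N then Some c else last) HS' Hsum' isT.
exists W => //; split; first exact: S''S.
rewrite big_cons [in X in _ <= X]addrACA; apply: lerD => //.
exact: key (S''S _ WS).
Qed.
End Run.

Theorem mainTheorem3 (R : realType) (n m : nat) (eps : R) :
  0 < eps -> (0 < n)%N -> (0 < m)%N ->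
  forall s : profile n m,
  exists W : 'I_m,
    pruned_plurality_veto s eps = Some W /\
    (* metric distortion at most 9 + eps *)
    (forall d : 'I_n + 'I_m -> 'I_n + 'I_m -> R,
       is_pseudometric d -> metric_consistent s d ->
       forall X : 'I_m, SC d W <= (9 + eps) * SC d X) /\
    (* utilitarian distortion at most (6 + eps) m^2 / eps *)
    (forall u : 'I_n -> 'I_m -> R,
       is_unit_sum_utility u -> utility_consistent s u ->
       forall X : 'I_m, SW u X <= (6 + eps) * (m%:R) ^+ 2 / eps * SW u W).
Proof.
move=> heps hn hm s.
pose x0 : 'I_m := Ordinal hm.
set thr := eps * n%:R / ((6 + eps) * m%:R).
have thr0 : 0 <= thr by rewrite /thr divr_ge0 ?mulr_ge0 ?ler0n ?ltW // ?addr_gt0.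
have mthr : m%:R * thr = eps * n%:R / (6 + eps).
  rewrite /thr; field; rewrite ?pnatr_eq0 -?lt0n ?hm //=.
  by apply/andP; split; rewrite ?pnatr_eq0 -?lt0n ?hm // lt0r_neq0 // addr_gt0.
pose tF j := odflt x0 (top_in s [set: 'I_m] j).
have tFP : forall j, top_in s [set: 'I_m] j = Some (tF j) /\ forall Y, (s j (tF j) <= s j Y)%N.
  move=> j; have [t [Ht _ Hm]] := top_spec s _ _ j (in_setT x0).
  by rewrite /tF Ht; split => // Y; apply: Hm; rewrite inE.
have pluE : forall X, plu s X = #|[set j | tF j == X]|.
  by move=> X; apply: eq_card => j; rewrite !inE (proj1 (tFP j)).
have sumplu : n%:R = \sum_c (plu s c)%:R :> R.
  have := part_sum (fun _ : 'I_m => (1 : R)) tF.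
  rewrite sumr_const card_ord => ->; apply: eq_bigr => c _.
  by rewrite pluE.
set A := pruned_set s eps.
have memA : forall X, (X \in A) = (thr <= (plu s X)%:R) by move=> X; rewrite inE.
have [xA xAA] : exists X, X \in A.
  apply/existsP; apply: contraT; rewrite negb_exists => /forallP H.
  have : n%:R <= m%:R * thr.
    rewrite sumplu mulr_natl -[X in thr *+ X](card_ord m) -sumr_const; apply: ler_sum => c _.
    by move: (H c); rewrite memA -ltNge => /ltW.
  rewrite mthr ler_pdivlMr ?addr_gt0 // => h.
  have : (0 < n%:R :> R) by rewrite ltr0n.
  nra.
pose tA j := odflt x0 (top_in s A j).
have tAP : forall j, [/\ top_in s A j = Some (tA j), tA j \in A & forall Y, Y \in A -> (s j (tA j) <= s j Y)%N].
  by move=> j; have [t [Ht tA' Hm]] := top_spec s A _ j xAA; rewrite /tA Ht.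
pose sc0 : {ffun 'I_m -> nat} := [ffun X => if X \in A then plu_in s A X else 0%N].
pose S0 := [set X in A | (0 < plu_in s A X)%N].
have sc0E : forall X, sc0 X = #|[set j | tA j == X]|.
  move=> X; rewrite ffunE; case: ifP => XA.
    by apply: eq_card => j; rewrite !inE; case: (tAP j) => -> _ _.
  apply/esym/eqP; rewrite cards_eq0; apply/eqP/setP => j; rewrite !inE.
  by apply/negbTE; apply: contraFN XA => /eqP <-; case: (tAP j).
have HS0 : forall X, (X \in S0) = (0 < sc0 X)%N.
  by move=> X; rewrite inE ffunE; case: (X \in A).
have Hsum0 : (\sum_X sc0 X)%N = size (enum 'I_n).
  rewrite size_enum_ord; apply/eqP; rewrite -(eqr_nat R) natr_sum; apply/eqP.
  rewrite -[n in n%:R](card_ord n) -sumr_const (part_sum (fun _ => (1:R)) tA).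
  by apply: eq_bigr => c _; rewrite sc0E.
have Hsc0f : forall f : 'I_m -> R, \sum_X (sc0 X)%:R * f X = \sum_j f (tA j).
  by move=> f; rewrite part_sum; apply: eq_bigr => c _; rewrite sc0E mulr_natl.
have hpos : (0 < size (enum 'I_n))%N by rewrite size_enum_ord.
have Hout : pruned_plurality_veto s eps = (foldl (pv_step s) (sc0, S0, None) (enum 'I_n)).2 by [].
have [W HW [WS _]] := @pv_run R n m s (fun _ _ => 0) (fun _ => 0) (fun _ => 0)
   (fun _ _ _ _ => lexx 0) (fun _ _ => ltac:(by rewrite addr0)) (enum 'I_n) sc0 S0 None HS0 Hsum0 hpos.
have WA : W \in A by move: WS; rewrite inE => /andP[].
exists W; split; first by rewrite Hout HW.
split.
  move=> d [d0 [dge [dsym dtri]]] dcons X.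
  have gmono : forall i Y Z, (s i Y <= s i Z)%N -> d (inl i) (inr Y) <= d (inl i) (inr Z).
    by move=> i Y Z /rank_le [->|H]; [exact: lexx | exact: dcons].
  have gtri : forall i c, d (inl i) (inr c) <= d (inl i) (inr X) + d (inr X) (inr c).
    by move=> i c; apply: dtri.
  have [W' HW' [_ Hb]] := @pv_run R n m s (fun i Y => d (inl i) (inr Y)) (fun i => d (inl i) (inr X))
     (fun c => d (inr X) (inr c)) gmono gtri (enum 'I_n) sc0 S0 None HS0 Hsum0 hpos.
  move: HW'; rewrite HW => -[eW]; rewrite -eW {W' eW} in Hb.
  rewrite !big_enum /= Hsc0f in Hb.
  have {}Hb : SC d W <= SC d X + \sum_j d (inr X) (inr (tA j)) by exact: Hb.
  have SCge : 0 <= SC d X by apply: sumr_ge0.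
  set G := [set j | tF j \in A].
  have cnt : 6 * n%:R <= (6 + eps) * #|G|%:R.
    have Bc : (#|~: G|%:R : R) <= eps * n%:R / (6+eps).
      rewrite -mthr.
      have -> : (#|~: G|%:R : R) = \sum_j (if tF j \in A then 0 else 1).
        rewrite -sumr_const big_mkcond; apply: eq_bigr => j _; rewrite !inE.
        by rewrite if_neg.
      rewrite (part_sum (fun c => if c \in A then 0 else 1) tF).
      rewrite mulr_natl -[X in thr *+ X](card_ord m) -sumr_const; apply: ler_sum => c _.
      case: ifP => cA; first by rewrite mul0rn.
      by rewrite -pluE; apply/ltW; rewrite ltNge -memA cA.
    have Hn : (#|G|%:R + #|~: G|%:R : R) = n%:R by rewrite -natrD cardsC card_ord.
    move: Bc; rewrite ler_pdivlMr ?addr_gt0 // -Hn => Bc.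
    nra.
  have [j1 j1G] : exists j, j \in G.
    apply/set0Pn; rewrite -card_gt0 lt0n; apply/negP => /eqP g0.
    move: cnt; rewrite g0 mulr0 => h.
    have : (0 < n%:R :> R) by rewrite ltr0n.
    lra.
  have [j0 j0G j0min] := @ex_min R _ G (fun j => d (inl j) (inr X)) j1 j1G.
  set D := d (inl j0) (inr X).
  have D0 : 0 <= D by apply: dge.
  have gD : #|G|%:R * D <= SC d X.
    rewrite mulr_natl -sumr_const /SC (bigID (mem G) predT) /=.
    rewrite -[X in X <= _]addr0; apply: lerD.
      by apply: ler_sum => j jG; apply: j0min.
    by apply: sumr_ge0.
  set Ys := tF j0.
  have YsA : Ys \in A by move: j0G; rewrite inE.
  have dYs : d (inr X) (inr Ys) <= D + D.
    apply: le_trans (dtri _ (inl j0) _) _; rewrite dsym; apply: lerD => //.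
    by apply: gmono; case: (tFP j0).
  have each : forall j, d (inr X) (inr (tA j)) <=
      d (inl j) (inr X) + d (inl j) (inr X) + d (inr X) (inr Ys).
    move=> j; apply: le_trans (dtri _ (inl j) _) _; rewrite dsym -addrA; apply: lerD => //.
    apply: le_trans (gtri j Ys); apply: gmono; case: (tAP j) => _ _; apply; exact: YsA.
  have Hs : \sum_j d (inr X) (inr (tA j)) <= SC d X + SC d X + n%:R * d (inr X) (inr Ys).
    apply: le_trans (ler_sum _ (fun j _ => each j)) _.
    by rewrite !big_split /= sumr_const card_ord mulr_natl.
  have h1 : n%:R * d (inr X) (inr Ys) <= n%:R * (D + D) by apply: ler_wpM2l; rewrite ?ler0n.
  have h2 : 6 * n%:R * D <= (6 + eps) * #|G|%:R * D by apply: ler_wpM2r.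
  have h3 : (6 + eps) * (#|G|%:R * D) <= (6 + eps) * SC d X.
    by apply: ler_wpM2l => //; apply: addr_ge0 => //; apply: ltW.
  nra.
move=> u uunit ucons X.
have umono : forall i Y Z, (s i Y <= s i Z)%N -> u i Z <= u i Y.
  by move=> i Y Z /rank_le [->|H]; [exact: lexx | exact: ucons].
have SWX : SW u X <= n%:R.
  rewrite /SW -[X in X%:R](card_ord n) -sumr_const; apply: ler_sum => i _.
  have [u0 u1] := uunit i; rewrite -u1 (bigD1 X) //= lerDl; exact: sumr_ge0.
have uW : forall j, j \in [set j | tF j == W] -> 1 <= m%:R * u j W.
  move=> j; rewrite inE => /eqP eW.
  apply: le_trans (_ : \sum_Y u j Y <= _); first by rewrite (uunit j).2.
  rewrite mulr_natl -[X in _ *+ X](card_ord m) -sumr_const; apply: ler_sum => Y _.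
  by apply: umono; rewrite -eW; case: (tFP j).
have mSW : thr <= m%:R * SW u W.
  apply: le_trans (_ : (plu s W)%:R <= _); first by rewrite -memA.
  rewrite pluE -sumr_const /SW mulr_sumr (bigID (mem [set j | tF j == W]) predT) /=.
  rewrite -[X in X <= _]addr0; apply: lerD.
    by apply: ler_sum => j jG; apply: uW.
  apply: sumr_ge0 => j _; apply: mulr_ge0; rewrite ?ler0n //; exact: (uunit j).1.
have m0 : (m%:R : R) != 0 by rewrite pnatr_eq0 -lt0n.
have e0 : eps != 0 by rewrite lt0r_neq0.
have e6 : 6 + eps != 0 by rewrite lt0r_neq0 // addr_gt0.
have e1 : (6+eps) * m%:R ^+ 2 / eps * SW u W = ((6+eps) * m%:R / eps) * (m%:R * SW u W).
  by rewrite expr2; field.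
have e2 : ((6+eps) * m%:R / eps) * thr = n%:R.
  by rewrite /thr; field; rewrite m0 e6 e0.
rewrite e1; apply: le_trans SWX _; rewrite -e2; apply: ler_wpM2l => //.
by apply: divr_ge0; [apply: mulr_ge0; [apply: addr_ge0 => //; apply: ltW | apply: ler0n] | apply: ltW].
Qed.
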